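(* In the setting of the context, let $\mu^*\in W_1$ and $U=B_1(\mu^* )$. Then for every $n\ge1$ the family $\{\mathscr{C}^{(n)}_\mu\}_{\mu\in U}$ is stable at $\mu^*$, i.e. there is $\delta>0$ such that (i) $\mathcal{I}_n(f_\mu)=\mathcal{I}_n(f_{\mu^*})$ for every $\mu\in U\cap B_\delta(\mu^* )$, and (ii) $d_H(A^\alpha_\mu,A^\alpha_{\mu^*})\to0$ as $\mu\to\mu^*$ for every $\alpha\in\mathcal{I}_n(f_{\mu^*})$.
   Context: $X\subset\mathbb{R}^d$ is a compact convex polytope (possibly not full-dimensional) with relative interior $\mathrm{relint}(X)$. $\ell\ge1$, $\mathcal{A}=\{-1,1\}^\ell$, $\varphi_i(x)=\Lambda_ix+b_i$ ($i\in\mathcal{A}$) with $\Lambda_i\in GL_d(\mathbb{R})$, $\|\Lambda_i\|<1$ in some operator norm, and $\varphi_i(X)\subset\mathrm{relint}(X)$. $v^{(1)},\dots,v^{(\ell)}$ are unit vectors in $\mathbb{R}^d$. Label map: $\sigma_\mu(x)=(s_1(x),\dots,s_\ell(x))$, $s_j(x)=-1$ if $\langle v^{(j)},x\rangle\le\mu_j$ and $1$ otherwise; $f_\mu(x)=\varphi_{\sigma_\mu(x)}(x)$ on $X$. $A_{i,\mu}=\mathrm{relint}(X)\cap\mathrm{relint}(\{x\in X:\sigma_\mu(x)=i\})$. For $\alpha=(i_0,\dots,i_{n-1})$: $A^\alpha_\mu=A_{i_0,\mu}\cap\varphi_{i_0}^{-1}(A_{i_1,\mu})\cap\cdots\cap(\varphi_{i_{n-2}}\circ\cdots\circ\varphi_{i_0})^{-1}(A_{i_{n-1},\mu})$.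 $\mathcal{I}_n(f_\mu)=\{\alpha\in\mathcal{A}^n:A^\alpha_\mu\ne\emptyset\}$. $\mathscr{C}^{(1)}_\mu=\{A_{i,\mu}\}_{i\in\mathcal{A}}$ and for $n\ge2$, $\mathscr{C}^{(n)}_\mu=\{A^\alpha_\mu:\alpha\in\mathcal{I}_n(f_\mu)\}$. $Z_\alpha=\{\mu:A^\alpha_\mu\ne\emptyset\}$ and $W_1=\mathbb{R}^\ell\setminus\bigcup_{n\ge1}\bigcup_{\alpha\in\mathcal{A}^n}\partial Z_\alpha$. $d_H$ is the Hausdorff distance. *)

(* Defs.v *)
From HB Require Import structures.
From mathcomp Require Import all_boot all_order all_algebra.
From mathcomp Require Import all_classical all_reals all_analysis.
Set Implicit Arguments. Unset Strict Implicit. Unset Printing Implicit Defensive.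
Import Order.TTheory GRing.Theory Num.Theory.
Import numFieldTopology.Exports numFieldNormedType.Exports.
Local Open Scope classical_set_scope.
Local Open Scope ring_scope.

Definition dotv (R : realType) (d : nat) (u x : 'cV[R]_d) : R :=
  \sum_(k < d) u k ord0 * x k ord0.
Definition enorm (R : realType) (d : nat) (x : 'cV[R]_d) : R :=
  Num.sqrt (dotv x x).

Definition eball (R : realType) (d : nat) (c : 'cV[R]_d) (r : R) : set 'cV[R]_d :=
  [set x | enorm (x - c) < r].

Definition affine_hull (R : realType) (d : nat) (S : set 'cV[R]_d) : set 'cV[R]_d :=
  [set x | exists (m : nat) (p : 'I_m -> 'cV[R]_d) (w : 'I_m -> R),
     (forall k, S (p k)) /\ \sum_(k < m) w k = 1 /\ x = \sum_(k < m) w k *: p k].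

Definition relint (R : realType) (d : nat) (S : set 'cV[R]_d) : set 'cV[R]_d :=
  [set x | S x /\ exists2 e : R, 0 < e &
     forall y, affine_hull S y -> enorm (y - x) < e -> S y].

Definition polytope (R : realType) (d : nat) (X : set 'cV[R]_d) : Prop :=
  exists (m : nat) (p : 'I_m.+1 -> 'cV[R]_d),
    X = [set x | exists w : 'I_m.+1 -> R, (forall k, 0 <= w k) /\
           \sum_(k < m.+1) w k = 1 /\ x = \sum_(k < m.+1) w k *: p k].

Definition is_norm (R : realType) (d : nat) (N : 'cV[R]_d -> R) : Prop :=
  (forall x, 0 <= N x) /\ (forall x, N x = 0 -> x = 0) /\
  (forall (a : R) x, N (a *: x) = `|a| * N x) /\
  (forall x y, N (x + y) <= N x + N y).

(* the operator norm of L induced by N is < 1, i.e. ||L||_N <= c for some c < 1 *)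
Definition opnorm_lt1 (R : realType) (d : nat) (N : 'cV[R]_d -> R) (L : 'M[R]_d) : Prop :=
  exists2 c : R, c < 1 & forall x, N (L *m x) <= c * N x.

(* Labels i in A = {-1,1}^l, encoded as boolean functions:
   i j = true  <-> i_j = 1,  i j = false <-> i_j = -1. *)
Definition label (l : nat) := {ffun 'I_l -> bool}.

Section Setting.
Variables (R : realType) (d l : nat).
Variables (X : set 'cV[R]_d) (Lam : label l -> 'M[R]_d) (b : label l -> 'cV[R]_d)
          (v : 'I_l -> 'cV[R]_d).

Definition phi (i : label l) (x : 'cV[R]_d) : 'cV[R]_d := Lam i *m x + b i.

Definition sigma (mu : 'cV[R]_l) (x : 'cV[R]_d) : label l :=
  [ffun j => ~~ (dotv (v j) x <= mu j ord0)].

Definition f (mu : 'cV[R]_l) (x : 'cV[R]_d) : 'cV[R]_d := phi (sigma mu x) x.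

Definition Acell (mu : 'cV[R]_l) (i : label l) : set 'cV[R]_d :=
  relint X `&` relint [set x | X x /\ sigma mu x = i].

Definition phis (s : seq (label l)) (x : 'cV[R]_d) : 'cV[R]_d :=
  foldl (fun y i => phi i y) x s.

Definition Aalpha (n : nat) (mu : 'cV[R]_l) (alpha : n.-tuple (label l)) : set 'cV[R]_d :=
  [set x | forall k : 'I_n, Acell mu (tnth alpha k) (phis (take k alpha) x)].

Definition Iset (n : nat) (mu : 'cV[R]_l) : set (n.-tuple (label l)) :=
  [set alpha | Aalpha mu alpha !=set0].

Definition Zset (n : nat) (alpha : n.-tuple (label l)) : set 'cV[R]_l :=
  [set mu | Aalpha mu alpha !=set0].

Definition bdry (S : set 'cV[R]_l) : set 'cV[R]_l := closure S `\` interior S.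

Definition W1 : set 'cV[R]_l :=
  [set mu | forall (n : nat) (alpha : n.-tuple (label l)), (0 < n)%N ->
     ~ bdry (Zset alpha) mu].

End Setting.
Arguments Iset {R d l} X Lam b v n mu.

Definition edist (R : realType) (d : nat) (x : 'cV[R]_d) (B : set 'cV[R]_d) : \bar R :=
  ereal_inf [set (enorm (x - y))%:E | y in B].
Definition dH (R : realType) (d : nat) (A B : set 'cV[R]_d) : \bar R :=
  maxe (ereal_sup [set edist a B | a in A]) (ereal_sup [set edist y A | y in B]).

(* Main.v *)
Require Import Defs.
From HB Require Import structures.
From mathcomp Require Import all_boot all_order all_algebra.
From mathcomp Require Import all_classical all_reals all_analysis.
From mathcomp Require Import lra ring.
Import Order.TTheory GRing.Theory Num.Theory.
Import numFieldTopology.Exports numFieldNormedType.Exports.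
Local Open Scope classical_set_scope.
Local Open Scope ring_scope.

Module Helpers.
Set Implicit Arguments. Unset Strict Implicit. Unset Printing Implicit Defensive.

Lemma msq (R : realType) (x : R) : 0 <= x * x.
Proof. by rewrite -expr2 sqr_ge0. Qed.

Section Vec.
Variables (R : realType) (d : nat).
Implicit Types (x y u : 'cV[R]_d).

Lemma dotvDr u x y : dotv u (x + y) = dotv u x + dotv u y.
Proof. rewrite /dotv -big_split /=; apply: eq_bigr => k _; by rewrite mxE mulrDr. Qed.

Lemma dotvZr u (a : R) x : dotv u (a *: x) = a * dotv u x.
Proof. rewrite /dotv mulr_sumr; apply: eq_bigr => k _; rewrite mxE; lra. Qed.

Lemma dotvBr u x y : dotv u (x - y) = dotv u x - dotv u y.
Proof. rewrite /dotv -sumrB; apply: eq_bigr => k _; by rewrite !mxE mulrBr. Qed.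

Lemma dotv_ge0 x : 0 <= dotv x x.
Proof. rewrite /dotv; apply: sumr_ge0 => k _; exact: msq. Qed.

Lemma enorm_ge0 x : 0 <= enorm x.
Proof. exact: sqrtr_ge0. Qed.

Lemma coord_le_enorm x k : `|x k ord0| <= enorm x.
Proof.
rewrite /enorm -(sqrtr_sqr (x k ord0)); apply: ler_wsqrtr.
rewrite /dotv (bigD1 k) //= expr2 -[X in X <= _]addr0 lerD2l; apply: sumr_ge0 => i _.
exact: msq.
Qed.

Lemma enorm_le_sum x : enorm x <= \sum_k `|x k ord0|.
Proof.
have h0 : 0 <= \sum_k `|x k ord0| by apply: sumr_ge0 => k _.
rewrite /enorm -(ger0_norm h0) -sqrtr_sqr; apply: ler_wsqrtr.
rewrite /dotv expr2 mulr_suml; apply: ler_sum => k _.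
rewrite mulr_sumr (bigD1 k) //= -normrM ger0_norm ?msq //.
rewrite -[X in X <= _]addr0 lerD2l; apply: sumr_ge0 => i _.
exact: mulr_ge0.
Qed.

Lemma enormZ (a : R) x : enorm (a *: x) = `|a| * enorm x.
Proof.
rewrite /enorm /dotv -sqrtr_sqr -sqrtrM ?sqr_ge0 //; congr Num.sqrt.
rewrite mulr_sumr; apply: eq_bigr => k _; rewrite !mxE; lra.
Qed.

Lemma enormN x : enorm (- x) = enorm x.
Proof. by rewrite -scaleN1r enormZ normrN normr1 mul1r. Qed.

Lemma dotv_bound u x : enorm u = 1 -> `|dotv u x| <= d%:R * enorm x.
Proof.
move=> hu; rewrite /dotv; apply: (le_trans (ler_norm_sum _ _ _)).
rewrite -[d in d%:R]card_ord -sumr_const mulr_suml; apply: ler_sum => k _; rewrite mul1r.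
rewrite normrM -[enorm x]mul1r -hu; apply: ler_pM => //; exact: coord_le_enorm.
Qed.

End Vec.


Section Aff.
Variables (R : realType) (d : nat).
Implicit Types (S X : set 'cV[R]_d) (x y z : 'cV[R]_d).

Lemma aff_sub S x : S x -> affine_hull S x.
Proof.
move=> Sx; exists 1%N, (fun _ => x), (fun _ => 1); split => //.
by rewrite !big_ord1 scale1r.
Qed.

Lemma aff_mono S1 S2 x : S1 `<=` S2 -> affine_hull S1 x -> affine_hull S2 x.
Proof. by move=> s [m [p [w [h1 [h2 h3]]]]]; exists m, p, w; split => // k; apply: s. Qed.

Lemma aff_comb S x y (s : R) : affine_hull S x -> affine_hull S y ->
  affine_hull S ((1 - s) *: x + s *: y).
Proof.
move=> [m1 [p1 [w1 [h1 [h2 ->]]]]] [m2 [p2 [w2 [g1 [g2 ->]]]]].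
pose q k := match @fintype.split m1 m2 k with inl i => p1 i | inr i => p2 i end.
pose w k := match @fintype.split m1 m2 k with inl i => (1 - s) * w1 i | inr i => s * w2 i end.
exists (m1 + m2)%N, q, w; split.
  by move=> k; rewrite /q; case: (fintype.split k).
rewrite !big_split_ord /= /q /w.
under eq_bigr => i _ do rewrite (unsplitK (inl i)).
under [X in _ + X = _]eq_bigr => i _ do rewrite (unsplitK (inr i)).
under [X in _ = X + _]eq_bigr => i _ do rewrite (unsplitK (inl i)).
under [X in _ = _ + X]eq_bigr => i _ do rewrite (unsplitK (inr i)).
rewrite /= -!mulr_sumr h2 g2 !scaler_sumr; split; first lra.
congr (_ + _); apply: eq_bigr => i _; by rewrite scalerA.
Qed.

Lemma aff_pmn S x y z : affine_hull S x -> affine_hull S y -> affine_hull S z ->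
  affine_hull S (x + y - z).
Proof.
move=> hx hy hz.
have hm := aff_comb (2^-1) hx hy.
have := aff_comb 2 hz hm.
congr affine_hull.
rewrite !scalerDr !scalerA mulfV ?pnatr_eq0 // !scale1r.
have -> : (1 - 2 : R) = -1 by lra.
have -> : (2 * (1 - 2^-1) : R) = 1 by field.
by rewrite scaleN1r scale1r addrC.
Qed.

Definition cvx_set X := forall x y (t : R), 0 <= t -> t <= 1 -> X x -> X y ->
  X ((1 - t) *: x + t *: y).

Lemma polytope_convex X : polytope X -> cvx_set X.
Proof.
move=> [m [p ->]] x y t t0 t1 [w1 [w10 [w11 ->]]] [w2 [w20 [w21 ->]]].
exists (fun k => (1 - t) * w1 k + t * w2 k); split.
  move=> k; apply: addr_ge0; apply: mulr_ge0 => //; lra.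
split; first by rewrite big_split /= -!mulr_sumr w11 w21; lra.
rewrite !scaler_sumr -big_split; apply: eq_bigr => k _.
by rewrite !scalerA [RHS]scalerDl.
Qed.

Lemma relint_sub X x : relint X x -> X x.
Proof. by case. Qed.

Lemma relint_convex X : cvx_set X -> cvx_set (relint X).
Proof.
move=> cX a b t t0 t1 [Xa [ea ea0 ha]] [Xb [eb eb0 hb]].
split; first exact: cX.
exists (Num.min ea eb); first by rewrite lt_min ea0 eb0.
move=> y hy; rewrite lt_min => /andP [hya hyb].
set c := (1 - t) *: a + t *: b.
have Xc : X c by exact: cX.
have h1 : X (a + y - c).
  apply: ha; first by apply: aff_pmn => //; apply: aff_sub.
  by have -> : a + y - c - a = y - c by apply/matrixP => i j; rewrite !mxE; ring.
have h2 : X (b + y - c).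
  apply: hb; first by apply: aff_pmn => //; apply: aff_sub.
  by have -> : b + y - c - b = y - c by apply/matrixP => i j; rewrite !mxE; ring.
have := cX _ _ _ t0 t1 h1 h2; congr X.
rewrite /c; apply/matrixP => i j; rewrite !mxE; ring.
Qed.

Lemma polytope_bounded X : polytope X -> exists2 D : R, 0 < D &
  forall x y, X x -> X y -> enorm (x - y) <= D.
Proof.
move=> [m [p ->]].
pose M k := \sum_(i < m.+1) `|p i k ord0|.
have hM : forall x, (exists w : 'I_m.+1 -> R, (forall k, 0 <= w k) /\
           \sum_(k < m.+1) w k = 1 /\ x = \sum_(k < m.+1) w k *: p k) ->
    forall k, `|x k ord0| <= M k.
  move=> x [w [w0 [w1 ->]]] k.
  rewrite summxE; apply: (le_trans (ler_norm_sum _ _ _)); apply: ler_sum => i _.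
  rewrite mxE normrM ger0_norm // -[X in _ <= X]mul1r; apply: ler_wpM2r => //.
  rewrite -w1 (bigD1 i) //= -[X in X <= _]addr0 lerD2l; exact: sumr_ge0.
exists (1 + \sum_k (M k + M k)).
  apply: (lt_le_trans ltr01); rewrite -[X in X <= _]addr0 lerD2l.
  by apply: sumr_ge0 => k _; apply: addr_ge0; apply: sumr_ge0.
move=> x y hx hy; apply: (le_trans (enorm_le_sum _)).
apply: (le_trans _ (ler_wpDl ler01 (lexx _))); apply: ler_sum => k _.
rewrite !mxE; apply: (le_trans (ler_normB _ _)); apply: lerD; exact: hM.
Qed.

End Aff.


Section Dyn.
Variables (R : realType) (d l : nat) (X : set 'cV[R]_d)
  (Lam : label l -> 'M[R]_d) (b : label l -> 'cV[R]_d) (v : 'I_l -> 'cV[R]_d).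
Hypothesis hphi : forall i, phi Lam b i @` X `<=` relint X.
Hypothesis hv : forall j, enorm (v j) = 1.

Lemma phis_comb s x y (t : R) :
  phis Lam b s ((1 - t) *: x + t *: y) = (1 - t) *: phis Lam b s x + t *: phis Lam b s y.
Proof.
elim: s x y => [|i s IH] x y //=.
rewrite /phis /= -/(phis Lam b s _) -/(phis Lam b s _) -/(phis Lam b s _) -IH.
congr phis; rewrite /phi mulmxDr -!scalemxAr.
apply/matrixP => p q; rewrite !mxE; ring.
Qed.

Lemma phis_relint s x : relint X x -> relint X (phis Lam b s x).
Proof.
elim: s x => [|i s IH] x //= hx.
rewrite /phis /= -/(phis Lam b s _); apply: IH; apply: hphi.
by exists x => //; case: hx.
Qed.

Definition gfun n (alpha : n.-tuple (label l)) (k : 'I_n) (j : 'I_l) (x : 'cV[R]_d) :=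
  dotv (v j) (phis Lam b (take k alpha) x).

Lemma gfun_comb n alpha k j x y t :
  @gfun n alpha k j ((1 - t) *: x + t *: y) = (1 - t) * gfun alpha k j x + t * gfun alpha k j y.
Proof. by rewrite /gfun phis_comb dotvDr !dotvZr. Qed.

Definition good n (mu : 'cV[R]_l) (alpha : n.-tuple (label l)) (r : R) x :=
  relint X x /\ forall k j, if tnth alpha k j then mu j ord0 + r <= gfun alpha k j x
                            else gfun alpha k j x <= mu j ord0 - r.

Definition weak n (mu : 'cV[R]_l) (alpha : n.-tuple (label l)) x :=
  relint X x /\ forall k j, if tnth alpha k j then mu j ord0 < gfun alpha k j x
                            else gfun alpha k j x <= mu j ord0.

Lemma good_Aalpha n mu alpha r x : 0 < r -> @good n mu alpha r x ->
  Aalpha X Lam b v mu alpha x.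
Proof.
move=> r0 [hx hg] k.
set w := phis Lam b (take k alpha) x.
have hw : relint X w by apply: phis_relint.
have hsig : forall y, (forall j, `|dotv (v j) y - dotv (v j) w| < r) ->
    sigma v mu y = tnth alpha k.
  move=> y hy; apply/ffunP => j; rewrite ffunE.
  have := hg k j; rewrite -/(gfun alpha k j x) /gfun -/w.
  have := hy j; case: (tnth alpha k j) => hyj hgj.
  - apply/negP => hle.
    move: hyj; rewrite ltr_norml => /andP [h1 h2]; lra.
  - apply: negbF; move: hyj; rewrite ltr_norml => /andP [h1 h2]; lra.
split => //.
split; first by split; [exact: relint_sub | apply: hsig => j; rewrite subrr normr0].
case: hw => Xw [e e0 he].
have d0 : (0 : R) < d%:R + 1 by rewrite ltr_wpDl // ler0n.
exists (Num.min e (r / (d%:R + 1))).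
  by rewrite lt_min e0 /= divr_gt0.
move=> y hy; rewrite lt_min => /andP [hye hyr].
have Xy : X y.
  apply: he => //; apply: (aff_mono _ hy) => z [] //.
split => //; apply: hsig => j.
rewrite -dotvBr; apply: (le_lt_trans (dotv_bound _ (hv j))).
apply: (@le_lt_trans _ _ (d%:R * (r / (d%:R + 1)))).
  by apply: ler_wpM2l; [rewrite ler0n | exact: ltW].
rewrite mulrA ltr_pdivrMr // -subr_gt0 mulrDr mulr1 [d%:R * r]mulrC addrAC subrr add0r. done.
Qed.

Lemma Aalpha_weak n mu alpha x : (0 < n)%N -> Aalpha X Lam b v mu alpha x ->
  @weak n mu alpha x.
Proof.
move=> n0 hA; split.
  have := hA (Ordinal n0); rewrite /= take0 => -[] //.
move=> k j; have [_ [[_ hs] _]] := hA k.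
move/ffunP: hs => /(_ j); rewrite ffunE /gfun.
case: (tnth alpha k j) => /= h.
  by rewrite ltNge h.
by move/negbFE: h.
Qed.

End Dyn.

Section Dyn2.
Variables (R : realType) (d l : nat) (X : set 'cV[R]_d)
  (Lam : label l -> 'M[R]_d) (b : label l -> 'cV[R]_d) (v : 'I_l -> 'cV[R]_d).

Lemma eq_lex (x y : R) : x = y -> x <= y.
Proof. by move->. Qed.

Lemma comb_ge (t A B a c : R) : 0 <= t -> t <= 1 -> A <= a -> B <= c ->
  (1 - t) * A + t * B <= (1 - t) * a + t * c.
Proof.
move=> t0 t1 h1 h2; apply: lerD; apply: ler_wpM2l => //; lra.
Qed.

Lemma comb_le (t A B a c : R) : 0 <= t -> t <= 1 -> a <= A -> c <= B ->
  (1 - t) * a + t * c <= (1 - t) * A + t * B.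
Proof.
move=> t0 t1 h1 h2; apply: lerD; apply: ler_wpM2l => //; lra.
Qed.

Lemma transfer n (alpha : n.-tuple (label l)) (nu : 'cV[R]_l) (eta r lam : R) y z :
  0 <= lam -> lam <= 1 -> eta = lam * r / 2 -> cvx_set X ->
  relint X y -> relint X z ->
  (forall k j, if tnth alpha k j then nu j ord0 - eta <= gfun Lam b v alpha k j y
               else gfun Lam b v alpha k j y <= nu j ord0 + eta) ->
  (forall k j, if tnth alpha k j then nu j ord0 + r - eta <= gfun Lam b v alpha k j z
               else gfun Lam b v alpha k j z <= nu j ord0 - r + eta) ->
  good X Lam b v nu alpha eta ((1 - lam) *: y + lam *: z).
Proof.
move=> l0 l1 he cX hy hz gy gz; split.
  exact: (relint_convex cX l0 l1 hy hz).
move=> k j; rewrite gfun_comb.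
have := gy k j; have := gz k j; case: (tnth alpha k j) => h1 h2.
  apply: le_trans (comb_ge l0 l1 h2 h1).
  by rewrite he; apply: eq_lex; field.
apply: le_trans (comb_le l0 l1 h2 h1) _.
by rewrite he; apply: eq_lex; field.
Qed.

End Dyn2.

Lemma nbhs_eball (R : realType) l (S : set 'cV[R]_l) (x : 'cV[R]_l) : nbhs x S -> exists2 e : R, 0 < e & forall y, enorm (y - x) < e -> S y.
Proof.
move=> /nbhs_ballP [e e0 he].
exists e => // y hy; apply: he; split => // i j.
rewrite [j]ord1 /ball /= -normrN opprB.
have := coord_le_enorm (y - x) i; rewrite !mxE => h; exact: (le_lt_trans h hy).
Qed.
Lemma nclos_eball (R : realType) l (S : set 'cV[R]_l) (x : 'cV[R]_l) : ~ closure S x -> exists2 e : R, 0 < e & forall y, enorm (y - x) < e -> ~ S y.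
Proof.
move=> /existsNP [B /not_implyP [hB hSB]].
have [e e0 he] := @nbhs_eball R l B x hB.
exists e => // y hy Sy; apply: hSB; exists y; split => //; exact: he.
Qed.

Lemma dH_le (R : realType) d (A B : set 'cV[R]_d) (eps : R) :
  (forall a, A a -> exists2 b, B b & enorm (a - b) <= eps) ->
  (forall a, B a -> exists2 b, A b & enorm (a - b) <= eps) ->
  (dH A B <= eps%:E)%E.
Proof.
move=> h1 h2; rewrite /dH ge_max; apply/andP; split; apply: ub_ereal_sup => _ [a ha <-].
  have [c hc hac] := h1 a ha; apply: (@le_trans _ _ (enorm (a - c))%:E).
    by apply: ereal_inf_lbound; exists c.
  by rewrite lee_fin.
have [c hc hac] := h2 a ha; apply: (@le_trans _ _ (enorm (a - c))%:E).
  by apply: ereal_inf_lbound; exists c.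
by rewrite lee_fin.
Qed.

Lemma fin_pos (R : realType) (T : finType) (P : T -> R -> Prop) :
  (forall a e e', 0 < e' -> e' <= e -> P a e -> P a e') ->
  (forall a, exists2 e, 0 < e & P a e) -> exists2 e, 0 < e & forall a, P a e.
Proof.
move=> mono h.
suff [e e0 he] : exists2 e, 0 < e & forall a, a \in enum T -> P a e.
  by exists e => // a; apply: he; rewrite mem_enum.
elim: (enum T) => [|a s [e e0 he]]; first by exists 1.
have [ea ea0 ha] := h a.
exists (Num.min e ea); first by rewrite lt_min e0 ea0.
move=> c; rewrite inE => /orP [/eqP -> | hc].
  by apply: (mono _ ea) => //; [rewrite lt_min e0 ea0 | rewrite ge_min lexx orbT].
by apply: (mono _ e) => //; [rewrite lt_min e0 ea0 | rewrite ge_min lexx | apply: he].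
Qed.

End Helpers.
Import Helpers.

Theorem lemma5p5 (R : realType) (d l : nat) (X : set 'cV[R]_d)
  (Lam : label l -> 'M[R]_d) (b : label l -> 'cV[R]_d) (v : 'I_l -> 'cV[R]_d)
  (mustar : 'cV[R]_l) (n : nat) :
  (0 < l)%N ->
  polytope X ->
  (forall i, Lam i \in unitmx) ->
  (exists N : 'cV[R]_d -> R, is_norm N /\ forall i, opnorm_lt1 N (Lam i)) ->
  (forall i, phi Lam b i @` X `<=` relint X) ->
  (forall j, enorm (v j) = 1) ->
  W1 X Lam b v mustar ->
  (0 < n)%N ->
  let U := eball mustar 1 in
  exists2 delta : R, 0 < delta &
    (forall mu, U mu -> eball mustar delta mu ->
       Iset X Lam b v n mu = Iset X Lam b v n mustar) /\
    (forall alpha : n.-tuple (label l), Iset X Lam b v n mustar alpha ->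
       forall eps : R, 0 < eps -> exists2 eta : R, 0 < eta &
         forall mu, U mu -> eball mustar eta mu ->
           (dH (Aalpha X Lam b v mu alpha) (Aalpha X Lam b v mustar alpha)
              <= eps%:E)%E).
Proof.
move=> hl hX _ _ hphi hv hW hn U.
have cX := polytope_convex hX.
have [D D0 hD] := polytope_bounded hX.
have Zloc : forall alpha : n.-tuple (label l), exists2 e : R, 0 < e &
    forall mu : 'cV[R]_l, enorm (mu - mustar) < e ->
      (Zset X Lam b v alpha mu <-> Zset X Lam b v alpha mustar).
  move=> alpha; have hb := hW n alpha hn.
  case: (pselect (Zset X Lam b v alpha mustar)) => hZ.
  - have hint : interior (Zset X Lam b v alpha) mustar.
      apply: contrapT => hni; apply: hb; split => //; exact: subset_closure.
    have [e e0 he] := nbhs_eball hint.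
    by exists e => // mu hmu; split => // _; apply: he.
  - have hncl : ~ closure (Zset X Lam b v alpha) mustar.
      by move=> hcl; apply: hb; split => // /interior_subset.
    have [e e0 he] := nclos_eball hncl.
    exists e => // mu hmu; split => h; last by [].
    by exfalso; apply: (he mu hmu h).
have [delta delta0 hdel] := fin_pos (P := fun (alpha : n.-tuple (label l)) (e : R) => forall mu : 'cV[R]_l,
    enorm (mu - mustar) < e ->
      (Zset X Lam b v alpha mu <-> Zset X Lam b v alpha mustar))
  (fun a e e' _ hle h mu hmu => h mu (lt_le_trans hmu hle)) Zloc.
exists delta => //; split.
  move=> mu _ hmu; apply/funext => alpha; apply/propext; exact: hdel alpha mu hmu.
move=> alpha hI eps eps0.
have [e1 e10 he1] := Zloc alpha.
have l0 : (0 : R) < l%:R by rewrite ltr0n.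
pose rho := e1 / (2 * l%:R).
have rho0 : 0 < rho by rewrite divr_gt0 // mulr_gt0.
pose mu' := mustar - const_mx rho.
have hmu' : enorm (mu' - mustar) < e1.
  rewrite /mu' addrAC subrr add0r enormN; apply: le_lt_trans (enorm_le_sum _) _.
  under eq_bigr => k _ do rewrite mxE.
  rewrite sumr_const card_ord -mulr_natr ger0_norm ?(ltW rho0) // /rho.
  have -> : e1 / (2 * l%:R) * l%:R = e1 / 2 by field; rewrite gt_eqF.
  lra.
have [y1 hy1] : Zset X Lam b v alpha mu' by apply/(he1 mu' hmu').
have [y0 hy0] := hI.
have w0 := Aalpha_weak hn hy0; have w1 := Aalpha_weak hn hy1.
pose P0 := fun (kj : ('I_n * 'I_l)%type) (e : R) => tnth alpha kj.1 kj.2 ->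
     mustar kj.2 ord0 + e <= gfun Lam b v alpha kj.1 kj.2 y0.
have hmono : forall kj e e', 0 < e' -> e' <= e -> P0 kj e -> P0 kj e'.
  by move=> kj e e' _ hle h hb; apply: le_trans (h hb); rewrite lerD2l.
have hex : forall kj, exists2 e : R, 0 < e & P0 kj e.
  move=> [k j]; rewrite /P0 /=; have := w0.2 k j.
  case: (tnth alpha k j) => h; last by exists 1.
  by exists (gfun Lam b v alpha k j y0 - mustar j ord0); rewrite ?subr_gt0 // addrC subrK.
have [r0 r00 hr0] := fin_pos hmono hex.
pose t := r0 / (2 * (r0 + rho)).
have rr0 : 0 < r0 + rho by rewrite addr_gt0.
have t0 : 0 <= t by rewrite divr_ge0 // ?mulr_ge0 // ltW.
have t1 : t <= 1.
  rewrite /t ler_pdivrMr ?mulr_gt0 // mul1r; lra.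
have trr : t * (r0 + rho) = r0 / 2 by rewrite /t; field; rewrite gt_eqF.
pose z := (1 - t) *: y0 + t *: y1.
pose r := Num.min (t * rho) (r0 / 2).
have r0' : 0 < r.
  rewrite lt_min divr_gt0 // andbT mulr_gt0 // /t divr_gt0 // mulr_gt0 //.
have hz : good X Lam b v mustar alpha r z.
  split; first exact: (relint_convex cX t0 t1 w0.1 w1.1).
  move=> k j; rewrite gfun_comb.
  have := w0.2 k j; have := w1.2 k j; have := hr0 (k, j); rewrite /P0 /=.
  rewrite /mu' !mxE.
  case: (tnth alpha k j) => hr h1 h0.
    have h0' := hr isT.
    apply: le_trans (comb_ge t0 t1 h0' (ltW h1)).
    have -> : (1 - t) * (mustar j ord0 + r0) + t * (mustar j ord0 - rho)
       = mustar j ord0 + r0 - t * (r0 + rho) by ring.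
    rewrite trr; have : r <= r0 / 2 by rewrite ge_min lexx orbT.
    lra.
  apply: le_trans (comb_le t0 t1 h0 h1) _.
  have -> : (1 - t) * mustar j ord0 + t * (mustar j ord0 - rho)
       = mustar j ord0 - t * rho by ring.
  by rewrite lerD2l lerN2 ge_min lexx.
pose lam := Num.min (1 / 2) (eps / D).
have lam0 : 0 < lam by rewrite lt_min divr_gt0 //= divr_gt0.
have lam1 : lam <= 1 by rewrite ge_min; apply/orP; left; lra.
have lamD : lam * D <= eps.
  by rewrite -ler_pdivlMr // ge_min lexx orbT.
pose eta := lam * r / 2.
have eta0 : 0 < eta by rewrite /eta divr_gt0 // mulr_gt0.
exists eta => // mu _ hmu.
have hco : forall j, `|mu j ord0 - mustar j ord0| < eta.
  move=> j; have := coord_le_enorm (mu - mustar) j; rewrite !mxE => h.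
  exact: le_lt_trans h hmu.
have hdist : forall y, X y -> enorm (y - ((1 - lam) *: y + lam *: z)) <= eps.
  move=> y Xy.
  have -> : y - ((1 - lam) *: y + lam *: z) = lam *: (y - z).
    by apply/matrixP => p q; rewrite !mxE; ring.
  rewrite enormZ (ger0_norm (ltW lam0)); apply: le_trans lamD.
  apply: ler_wpM2l; first exact: ltW.
  by apply: hD => //; apply: relint_sub (hz.1).
have zX : relint X z := hz.1.
apply: dH_le.
- move=> y hy; have wy := Aalpha_weak hn hy.
  exists ((1 - lam) *: y + lam *: z); last by apply: hdist; apply: relint_sub wy.1.
  apply: (good_Aalpha hphi hv eta0).
  apply: transfer (ltW lam0) lam1 _ cX wy.1 zX _ _ => //.
    move=> k j; have := wy.2 k j; have := hco j.
    rewrite ltr_norml; case: (tnth alpha k j) => /andP [c1 c2] h; lra.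
  move=> k j; have := hz.2 k j; have := hco j.
  rewrite ltr_norml; case: (tnth alpha k j) => /andP [c1 c2] h; lra.
- move=> y hy; have wy := Aalpha_weak hn hy.
  exists ((1 - lam) *: y + lam *: z); last by apply: hdist; apply: relint_sub wy.1.
  apply: (good_Aalpha hphi hv eta0).
  apply: transfer (ltW lam0) lam1 _ cX wy.1 zX _ _ => //.
    move=> k j; have := wy.2 k j; have := hco j.
    rewrite ltr_norml; case: (tnth alpha k j) => /andP [c1 c2] h; lra.
  move=> k j; have := hz.2 k j; have := hco j.
  rewrite ltr_norml; case: (tnth alpha k j) => /andP [c1 c2] h; lra.
Qed.
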